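(* Let $\nu,\beta>0$, $\rho>1$, $n\ge1$, and let $X,X_1,\ldots,X_n$ be i.i.d. $\mathrm{Pareto}(\nu,\beta)$. Let $J_n\coloneqq\log_\rho X_{(n)}$ where $X_{(n)}=\max_iX_i$, and define \[p_{\mathrm{last}}\coloneqq\Pr\left(\rho^{\lceil J_n\rceil-1}<X\le\rho^{\lceil J_n\rceil}\right),\qquad p_{\mathrm{tail}}\coloneqq\Pr\left(X>\rho^{\lceil J_n\rceil}\right)\] (probabilities taken jointly over $X$ and $X_1,\ldots,X_n$). Then \[p_{\mathrm{last}}\le\frac{\rho^\beta-\rho^{-\beta}}{n+1}\qquad\text{and}\qquad\frac{\rho^{-\beta}}{n+1}\le p_{\mathrm{tail}}\le\frac{1}{n+1}.\]
   Context: $\mathrm{Pareto}(\nu,\beta)$ has CDF $1-(\nu/x)^\beta$ for $x>\nu$. *)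

(* Defs.v *)
From HB Require Import structures.
From mathcomp Require Import all_boot all_order all_algebra.
From mathcomp Require Import all_classical all_reals all_analysis.
Set Implicit Arguments. Unset Strict Implicit. Unset Printing Implicit Defensive.
Import Order.TTheory GRing.Theory Num.Theory.
Local Open Scope classical_set_scope.
Local Open Scope ring_scope.

Definition is_pareto {R : realType} {d : measure_display} {T : measurableType d}
  (P : probability T R) (nu beta : R) (Y : T -> R) : Prop :=
  measurable_fun setT Y /\
  forall x : R, P [set t | Y t <= x] =
    (if nu < x then 1 - (nu / x) `^ beta else 0)%:E.

(* Mutual independence of a finite family of real random variables:
   product rule for every choice of Borel sets (taking B i = setT
   recovers every subfamily). *)
Definition mutually_independent {R : realType} {d : measure_display}
  {T : measurableType d} (P : probability T R) (k : nat)
  (Xs : 'I_k -> T -> R) : Prop :=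
  (forall i, measurable_fun setT (Xs i)) /\
  forall B : 'I_k -> set R, (forall i, measurable (B i)) ->
    P (\bigcap_(i in [set: 'I_k]) (Xs i @^-1` B i)) =
    (\prod_(i < k) P (Xs i @^-1` B i))%E.

(* Sample maximum X_(n) = max_{1<=i<=n} X_i, where the family Xs is indexed by
   'I_n.+1, index 0 being the extra copy X and index lift ord0 i being X_(i+1).
   (Initial value 0 is harmless: Pareto variables are > nu > 0.) *)
Definition sample_max {R : realType} {T : Type} (n : nat)
  (Xs : 'I_n.+1 -> T -> R) (t : T) : R :=
  \big[Num.max/0]_(i < n) Xs (lift ord0 i) t.

Definition Jn {R : realType} {T : Type} (n : nat) (rho : R)
  (Xs : 'I_n.+1 -> T -> R) (t : T) : R :=
  ln (sample_max Xs t) / ln rho.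

Definition cJ {R : realType} {T : Type} (n : nat) (rho : R)
  (Xs : 'I_n.+1 -> T -> R) (t : T) : int :=
  Num.ceil (Jn rho Xs t).

Definition last_event {R : realType} {T : Type} (n : nat) (rho : R)
  (Xs : 'I_n.+1 -> T -> R) : set T :=
  [set t | rho `^ ((cJ rho Xs t)%:~R - 1) < Xs ord0 t <=
           rho `^ (cJ rho Xs t)%:~R].

Definition tail_event {R : realType} {T : Type} (n : nat) (rho : R)
  (Xs : 'I_n.+1 -> T -> R) : set T :=
  [set t | rho `^ (cJ rho Xs t)%:~R < Xs ord0 t].

(* Main.v *)
Require Import Defs.
From HB Require Import structures.
From mathcomp Require Import all_boot all_order all_algebra.
From mathcomp Require Import all_classical all_reals all_analysis.
From mathcomp Require Import ring lra.
Import Order.TTheory GRing.Theory Num.Theory.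
Local Open Scope classical_set_scope.
Local Open Scope ring_scope.
Set Implicit Arguments. Unset Strict Implicit. Unset Printing Implicit Defensive.

Section S.
Context (R : realType) (d : measure_display) (T : measurableType d)
  (P : probability T R).

Definition pr (A : set T) : R := fine (P A).

Lemma prE A : measurable A -> P A = (pr A)%:E.
Proof.
move=> mA; rewrite /pr fineK // ge0_fin_numE ?measure_ge0 //.
by apply: (le_lt_trans (probability_le1 P mA)); exact: ltey.
Qed.

Lemma pr_ge0 A : 0 <= pr A.
Proof. by rewrite /pr; apply: fine_ge0; exact: measure_ge0. Qed.

Lemma pr_le A B : measurable A -> measurable B -> A `<=` B -> pr A <= pr B.
Proof.
move=> mA mB AB; rewrite -lee_fin -prE // -prE //.
by apply: le_measure => //; rewrite inE.
Qed.

Lemma pr_U A B : measurable A -> measurable B -> pr (A `|` B) <= pr A + pr B.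
Proof.
move=> mA mB; rewrite -lee_fin EFinD -!prE //; last exact: measurableU.
exact: measureU2.
Qed.

Lemma pr_C A : measurable A -> pr (~` A) = 1 - pr A.
Proof.
move=> mA; apply/eqP; rewrite -eqe EFinB -!prE //; last exact: measurableC.
by rewrite probability_setC.
Qed.

Lemma pr_D A B : measurable A -> measurable B -> B `<=` A -> pr (A `\` B) = pr A - pr B.
Proof.
move=> mA mB BA; apply/eqP; rewrite -eqe EFinB -!prE //; last exact: measurableD.
rewrite measureD //.
  by rewrite (_ : A `&` B = B) //; apply/setIidr.
by apply: (le_lt_trans (probability_le1 P mA)); exact: ltey.
Qed.

End S.

Section SU.
Context (R : realType) (d : measure_display) (T : measurableType d).

Lemma mlt (f g : T -> R) : measurable_fun setT f -> measurable_fun setT g ->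
  measurable [set t | f t < g t].
Proof.
move=> mf mg; have := measurable_realfun.measurable_fun_ltr mf mg measurableT (Y := [set true]).
by rewrite setTI; apply.
Qed.

Lemma mle (f g : T -> R) : measurable_fun setT f -> measurable_fun setT g ->
  measurable [set t | f t <= g t].
Proof.
move=> mf mg; have := measurable_realfun.measurable_fun_ler mf mg measurableT (Y := [set true]).
by rewrite setTI; apply.
Qed.

Lemma m_int_union (F : int -> set T) : (forall k, measurable (F k)) ->
  measurable [set t | exists k, F k t].
Proof.
move=> mF.
have -> : [set t | exists k, F k t] =
  \bigcup_(m : nat) (if (unpickle m : option int) is Some k then F k else set0).
  apply/seteqP; split => t /=.
    by move=> [k Fk]; exists (pickle k) => //; rewrite pickleK.
  by move=> [m _]; case: unpickle => // k Fk; exists k.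
by apply: bigcupT_measurable => m; case: unpickle.
Qed.

End SU.


Section Alg.
Context (R : realFieldType).

Lemma amgm (n : nat) (x y : R) : 0 <= x -> 0 <= y ->
  (n.+1)%:R * x ^+ n * y <= y ^+ n.+1 + n%:R * x ^+ n.+1.
Proof.
move=> x0 y0; elim: n => [|n IH].
  rewrite expr0 expr1 mulr1; lra.
have h1 : 0 <= (n.+1)%:R * x ^+ n * (x - y) ^+ 2.
  by rewrite mulr_ge0 ?sqr_ge0 // mulr_ge0 // exprn_ge0.
have h2 := ler_wpM2l y0 IH.
have e1 : y ^+ n.+2 + (n.+1)%:R * x ^+ n.+2 - (n.+2)%:R * x ^+ n.+1 * y
  = y * (y ^+ n.+1 + n%:R * x ^+ n.+1 - (n.+1)%:R * x ^+ n * y)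
    + (n.+1)%:R * x ^+ n * (x - y) ^+ 2.
  rewrite !exprS !mulrS; ring.
rewrite -subr_ge0 e1; apply: addr_ge0 => //.
by apply: mulr_ge0 => //; rewrite subr_ge0.
Qed.


Definition G (n : nat) (v : R) := v ^+ n - n%:R / (n.+1)%:R * v ^+ n.+1.

Lemma I1 n a b : 0 <= a -> 0 <= b ->
  (b ^+ n - a ^+ n) * (1 - b) <= G n b - G n a.
Proof.
move=> a0 b0; have h := amgm n a0 b0.
have N1 : (n.+1)%:R != 0 :> R by rewrite pnatr_eq0.
have e : G n b - G n a - (b ^+ n - a ^+ n) * (1 - b) =
   (b ^+ n.+1 + n%:R * a ^+ n.+1 - (n.+1)%:R * a ^+ n * b) / (n.+1)%:R.
  rewrite /G !exprS; field; by rewrite -mulrS pnatr_eq0.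
rewrite -subr_ge0 e divr_ge0 //; first by rewrite subr_ge0.
Qed.

Lemma I2 n a b : 0 <= a -> 0 <= b ->
  G n b - G n a <= (b ^+ n - a ^+ n) * (1 - a).
Proof.
move=> a0 b0; have h := amgm n b0 a0.
have N1 : (n.+1)%:R != 0 :> R by rewrite pnatr_eq0.
have e : (b ^+ n - a ^+ n) * (1 - a) - (G n b - G n a) =
   (a ^+ n.+1 + n%:R * b ^+ n.+1 - (n.+1)%:R * b ^+ n * a) / (n.+1)%:R.
  rewrite /G !exprS; field; by rewrite -mulrS pnatr_eq0.
rewrite -subr_ge0 e divr_ge0 //; first by rewrite subr_ge0.
Qed.

Lemma powb m (v : R) : 0 <= v <= 1 -> 1 - v ^+ m <= m%:R * (1 - v).
Proof.
move=> /andP[v0 v1]; elim: m => [|m IH]; first by rewrite expr0 subrr mul0r.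
have h : v ^+ m <= 1 by exact: exprn_ile1.
have h' : 0 <= v ^+ m by exact: exprn_ge0.
rewrite exprS mulrS; nra.
Qed.

Lemma G1 n : G n 1 = 1 / (n.+1)%:R.
Proof.
have N1 : (n.+1)%:R != 0 :> R by rewrite pnatr_eq0.
rewrite /G !expr1n mulr1 mulrS; field; by rewrite -mulrS.
Qed.

Lemma G_le v n : 0 <= v -> G n v <= 1 / (n.+1)%:R.
Proof.
move=> v0; have := I1 n v0 (@ler01 R); rewrite subrr mulr0 G1 subr_ge0 //.
Qed.

Lemma G_ge v n : 0 <= v <= 1 -> 1 / (n.+1)%:R - (1 - v) <= G n v.
Proof.
move=> /andP[v0 v1]; have := I2 n v0 (@ler01 R); rewrite G1 expr1n => h.
have h1 : 0 <= v ^+ n by exact: exprn_ge0.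
have h3 : (1 - v ^+ n) * (1 - v) <= 1 - v.
  by rewrite ler_piMl ?subr_ge0 // lerBlDr lerDl.
move: h h3; set q := 1 / _; set g := G n v; set p := (1 - v ^+ n) * (1 - v); lra.
Qed.

Lemma alg1 (x y p q k : R) : x - k * p - (y - k * q) = (x - y) - k * (p - q).
Proof. by ring. Qed.

Lemma alg2 (v k : R) : v - k + (1 - v) = 1 - k.
Proof. by ring. Qed.

Lemma step_low n (a b w : R) : 0 <= a -> 0 <= b -> a <= b -> 0 < w ->
  1 - a <= w * (1 - b) ->
  (b ^+ n - a ^+ n) * b <= b ^+ n - w^-1 * G n b - (a ^+ n - w^-1 * G n a).
Proof.
move=> a0 b0 ab w0 r.
have D0 : 0 <= b ^+ n - a ^+ n.
  by rewrite subr_ge0; apply: lerXn2r => //; rewrite nnegrE.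
have g := I2 n a0 b0.
have g2 : (b ^+ n - a ^+ n) * (1 - a) <= (b ^+ n - a ^+ n) * (w * (1 - b)).
  exact: (ler_wpM2l D0 r).
have g3 : w^-1 * (G n b - G n a) <= (b ^+ n - a ^+ n) * (1 - b).
  rewrite ler_pdivrMl // mulrCA; exact: le_trans g g2.
rewrite alg1 lerBrDr -lerBrDl; apply: le_trans g3 _.
by rewrite mulrBr mulr1.
Qed.

Lemma step_last n (a b w : R) : 0 <= a -> 0 <= b -> a <= b -> 1 <= w ->
  1 - a <= w * (1 - b) ->
  (b ^+ n - a ^+ n) * (b - a) <= (w - 1) * G n b - (w - 1) * G n a.
Proof.
move=> a0 b0 ab w1 r.
have D0 : 0 <= b ^+ n - a ^+ n.
  by rewrite subr_ge0; apply: lerXn2r => //; rewrite nnegrE.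
have g := I1 n a0 b0.
have h1 : b - a <= (w - 1) * (1 - b) by lra.
have h2 := ler_wpM2l D0 h1.
rewrite -mulrBr; apply: le_trans h2 _.
rewrite mulrCA; apply: ler_wpM2l; first by rewrite subr_ge0.
exact: g.
Qed.

Lemma fin_last n (p v w : R) : 0 <= v <= 1 -> 1 <= w ->
  p <= (w - 1) * G n v + (1 - v ^+ n) ->
  p <= (w - 1) / (n.+1)%:R + n%:R * (1 - v).
Proof.
move=> /andP[v0 v1] w1 h; apply: (le_trans h); apply: lerD.
  apply: ler_wpM2l; first by rewrite subr_ge0.
  by have := G_le n v0; rewrite mul1r.
by apply: powb; rewrite v0 v1.
Qed.

Lemma fin_tail_up n (p v : R) : 0 <= v <= 1 ->
  p <= G n v + (1 - v ^+ n) -> p <= 1 / (n.+1)%:R + n%:R * (1 - v).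
Proof.
move=> vv h; apply: (le_trans h).
have q := powb n.+1 vv.
have N1 : (n.+1)%:R != 0 :> R by rewrite pnatr_eq0.
have e : 1 / (n.+1)%:R + n%:R * (1 - v) - (G n v + (1 - v ^+ n)) =
   n%:R / (n.+1)%:R * ((n.+1)%:R * (1 - v) - (1 - v ^+ n.+1)).
  rewrite /G !exprS; field; by rewrite -mulrS pnatr_eq0.
rewrite -subr_ge0 e; apply: mulr_ge0; first by rewrite divr_ge0.
by rewrite subr_ge0.
Qed.

Lemma fin_tail_low n (p v w : R) : 0 <= v <= 1 -> 1 <= w ->
  w^-1 * G n v <= p -> w^-1 / (n.+1)%:R - (1 - v) <= p.
Proof.
move=> vv w1 h; apply: le_trans h.
have w0 : 0 < w by exact: lt_le_trans w1.
have g := G_ge n vv.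
have i1 : w^-1 <= 1 by rewrite invr_le1 // unitfE gt_eqF.
have i0 : 0 <= w^-1 by rewrite invr_ge0 ltW.
have vv' : 0 <= 1 - v by case/andP: vv => _; rewrite subr_ge0.
have h1 := ler_wpM2l i0 g.
have h2 : w^-1 * (1 - v) <= 1 - v by rewrite ler_piMl.
rewrite mulrBr in h1.
rewrite (_ : w^-1 / (n.+1)%:R = w^-1 * (1 / (n.+1)%:R)); last by rewrite mul1r.
exact: le_trans (lerB (lexx _) h2) h1.
Qed.

Lemma G0 n : (0 < n)%N -> G n 0 = 0.
Proof. by case: n => // n _; rewrite /G !expr0n /= mulr0 subr0. Qed.

End Alg.

Section M.
Context (R : realType) (d : measure_display) (T : measurableType d)
  (P : probability T R) (n : nat) (nu beta rho : R)
  (Xs : 'I_n.+1 -> T -> R).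
Hypotheses (nu_gt0 : 0 < nu) (beta_gt0 : 0 < beta) (rho_gt1 : 1 < rho)
  (n_ge1 : (1 <= n)%N) (indep : mutually_independent P Xs)
  (par : forall i, is_pareto P nu beta (Xs i)).

Definition F (c : R) : R := if nu < c then 1 - (nu / c) `^ beta else 0.

Local Notation M := (sample_max Xs).
Local Notation Y := (Xs ord0).

Lemma mX i : measurable_fun setT (Xs i).
Proof. exact: (par i).1. Qed.

Lemma mM : measurable_fun setT M.
Proof.
suff H : forall r : seq 'I_n,
  measurable_fun setT (fun t => \big[Num.max/0]_(i <- r) Xs (lift ord0 i) t).
  exact: H.
elim => [|i r IH].
  under eq_fun do rewrite big_nil.
  exact: measurable_cst.
under eq_fun do rewrite big_cons.
exact: (measurable_realfun.measurable_maxr (mX (lift ord0 i)) IH).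
Qed.

Lemma prX i c : pr P (Xs i @^-1` [set x | x <= c]) = F c.
Proof.
rewrite /pr /preimage /= (par i).2 /=.
by rewrite /F; case: ifP.
Qed.

Lemma le_M t c : 0 <= c -> (M t <= c) <-> (forall i : 'I_n, Xs (lift ord0 i) t <= c).
Proof.
move=> c0; split.
  by move=> H i; apply: le_trans H; exact: le_bigmax.
by move=> H; apply: bigmax_le.
Qed.

Lemma prod_rule S c : measurable S -> 0 <= c ->
  pr P ((Y @^-1` S) `&` [set t | M t <= c]) = pr P (Y @^-1` S) * F c ^+ n.
Proof.
move=> mS c0.
pose B (i : 'I_n.+1) := if i == ord0 then S else [set x : R | x <= c].
have mB : forall i, measurable (B i).
  move=> i; rewrite /B; case: ifP => _ //.
  rewrite (_ : [set x : R | x <= c] = `]-oo, c]%classic); first exact: measurable_itv.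
  by apply/seteqP; split => x /=; rewrite in_itv /=.
have := indep.2 B mB.
have -> : \bigcap_(i in [set: 'I_n.+1]) Xs i @^-1` B i = (Y @^-1` S) `&` [set t | M t <= c].
  apply/seteqP; split => t /=.
    move=> H; split; first by have := H ord0 I; rewrite /B eqxx.
    apply/le_M => // i; have := H (lift ord0 i) I.
    by rewrite /B /=.
  move=> [YS Hc] i _.
  have {}Hc := (le_M t c0).1 Hc.
  rewrite /B; case: ifP => [/eqP -> //|ne].
  have [j ->] : exists j, i = lift ord0 j.
    by case: (unliftP ord0 i) => [j ->|e]; [exists j | rewrite e eqxx in ne].
  exact: Hc.
rewrite big_ord_recl /B eqxx /=.
move=> H; rewrite /pr H.
rewrite (eq_bigr (fun=> (F c)%:E)); last first.
  move=> i _; rewrite -(prX (lift ord0 i) c) prE //.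
  rewrite -[_ @^-1` _]setTI; apply: (mX _ measurableT).
  rewrite (_ : [set x : R | x <= c] = `]-oo, c]%classic); first exact: measurable_itv.
  by apply/seteqP; split => x /=; rewrite in_itv /=.
rewrite prodEFin prodr_const card_ord (prE _ (_ : measurable (Y @^-1` S))).
  by rewrite -EFinM.
by rewrite -[_ @^-1` _]setTI; apply: (mX _ measurableT).
Qed.

Lemma mY S : measurable S -> measurable (Y @^-1` S).
Proof. by move=> mS; rewrite -[_ @^-1` _]setTI; apply: (mX _ measurableT). Qed.

Lemma mH c : measurable [set t | M t <= c].
Proof. exact: (mle mM (measurable_cst c)). Qed.

Lemma prH c : 0 <= c -> pr P [set t | M t <= c] = F c ^+ n.
Proof.
move=> c0; have := prod_rule measurableT c0.
rewrite preimage_setT setTI => ->.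
by rewrite /pr probability_setT /= mul1r.
Qed.

Lemma nullG : pr P [set t | M t <= nu] = 0.
Proof.
rewrite prH; last exact: ltW.
by rewrite /F ltxx expr0n; case: n n_ge1.
Qed.

Lemma F_ge0 c : 0 <= F c.
Proof.
rewrite /F; case: ifP => // lt; rewrite subr_ge0.
have h : nu / c <= 1 by rewrite ler_pdivrMr ?mul1r ?ltW // (lt_trans nu_gt0 lt).
have := ge0_ler_powR (ltW beta_gt0) _ _ h; rewrite powR1; apply.
- by rewrite nnegrE divr_ge0 // ltW // (lt_trans nu_gt0 lt).
- by rewrite nnegrE.
Qed.

Lemma F_le1 c : F c <= 1.
Proof. by rewrite /F; case: ifP => // _; rewrite lerBlDr lerDl powR_ge0. Qed.


Definition c (k : int) : R := rho `^ k%:~R.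

Lemma rho_gt0 : 0 < rho. Proof. exact: lt_trans rho_gt1. Qed.
Lemma lnrho_gt0 : 0 < ln rho. Proof. exact: ln_gt0. Qed.

Lemma c_gt0 k : 0 < c k. Proof. exact: powR_gt0 rho_gt0. Qed.

Lemma ln_c k : ln (c k) = k%:~R * ln rho.
Proof. by rewrite /c ln_powR. Qed.

Lemma c_le k y : 0 < y -> (c k <= y) = (k%:~R * ln rho <= ln y).
Proof. by move=> y0; rewrite -ln_c ler_ln // posrE ?c_gt0. Qed.

Lemma c_lt k y : 0 < y -> (c k < y) = (k%:~R * ln rho < ln y).
Proof. by move=> y0; rewrite -ln_c ltr_ln // posrE ?c_gt0. Qed.

Lemma ge_c k y : 0 < y -> (y <= c k) = (ln y <= k%:~R * ln rho).
Proof. by move=> y0; rewrite -ln_c ler_ln // posrE ?c_gt0. Qed.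

Lemma c_mono k l : (k <= l)%R -> c k <= c l.
Proof.
move=> kl; rewrite c_le ?c_gt0 // ln_c ler_wpM2r ?ler_int //.
exact: ltW lnrho_gt0.
Qed.

Lemma cB1 k : c (k - 1) = c k / rho.
Proof.
rewrite /c intrB powRB; last by rewrite implybE (gt_eqF rho_gt0) orbT.
by rewrite powRr1 // ltW // rho_gt0.
Qed.

Lemma cJ_eq t k : 0 < M t -> c (k - 1) < M t <= c k -> cJ rho Xs t = k.
Proof.
move=> M0 /andP[h1 h2]; apply: ceil_def; rewrite /Jn.
rewrite ltr_pdivlMr ?lnrho_gt0 // ler_pdivrMr ?lnrho_gt0 //.
by rewrite -c_lt // -ge_c // h1 h2.
Qed.

Lemma F_mono a b : a <= b -> F a <= F b.
Proof.
move=> ab; have [lta|nlta] := ltP nu a; last first.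
  by rewrite /F (_ : (nu < a) = false) ?F_ge0 // ltNge nlta.
have ltb : nu < b by exact: lt_le_trans ab.
rewrite /F lta ltb lerD2l lerN2.
have a0 : 0 < a by exact: lt_trans lta.
apply: ge0_ler_powR; first exact: ltW.
- by rewrite nnegrE divr_ge0 // ltW // (lt_le_trans a0 ab).
- by rewrite nnegrE divr_ge0 // ltW.
by rewrite ler_pM2l // lef_pV2 // posrE (lt_le_trans a0 ab).
Qed.

Lemma w_ge1 : 1 <= rho `^ beta.
Proof.
have := ge0_ler_powR (ltW beta_gt0) _ _ (ltW rho_gt1); rewrite powR1; apply.
- by rewrite nnegrE.
- by rewrite nnegrE ltW // rho_gt0.
Qed.

Lemma F_ratio x : 0 < x -> 1 - F (x / rho) <= rho `^ beta * (1 - F x).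
Proof.
move=> x0; rewrite /F.
have e11 : forall p : R, 1 - (1 - p) = p by move=> p; rewrite opprB addrC subrK.
have xr0 : 0 < x / rho by rewrite divr_gt0 // rho_gt0.
case: ifP => [lt1|nlt1].
  have lt2 : nu < x.
    apply: (lt_le_trans lt1); rewrite ler_pdivrMr ?rho_gt0 // ler_peMr ?ltW //.
  rewrite lt2 !e11.
  rewrite -(powRM _ (ltW rho_gt0) (divr_ge0 (ltW nu_gt0) (ltW x0))).
  by rewrite invf_div mulrCA.
case: ifP => [lt2|_]; last by rewrite !subr0 mulr1 w_ge1.
rewrite subr0 e11 -(powRM _ (ltW rho_gt0) (divr_ge0 (ltW nu_gt0) (ltW x0))).
have h : 1 <= rho * (nu / x).
  rewrite mulrA ler_pdivlMr // mul1r -ler_pdivrMl ?rho_gt0 // mulrC.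
  by rewrite leNgt nlt1.
have := ge0_ler_powR (ltW beta_gt0) _ _ h; rewrite powR1; apply.
- by rewrite nnegrE.
- by rewrite nnegrE mulr_ge0 ?divr_ge0 ?ltW ?rho_gt0.
Qed.

Definition u (s : int) (j : nat) := F (c (s + j%:Z)).
Definition H (s : int) (j : nat) := [set t | M t <= c (s + j%:Z)].

Lemma mHs s j : measurable (H s j).
Proof. exact: mH. Qed.

Lemma step s E (S : nat -> set R) (Phi : R -> R) :
  c s <= nu -> measurable E -> (forall j, measurable (S j)) ->
  (forall t j, nu < M t -> E t -> M t <= c (s + (j.+1)%:Z) ->
     c (s + j%:Z) < M t -> S j.+1 (Y t)) ->
  0 <= Phi (u s 0) ->
  (forall j, (u s j.+1 ^+ n - u s j ^+ n) * pr P (Y @^-1` S j.+1)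
     <= Phi (u s j.+1) - Phi (u s j)) ->
  forall L, pr P (E `&` H s L) <= Phi (u s L).
Proof.
move=> csnu mE mS hS Phi0 hPhi; elim => [|L IH].
  apply: le_trans Phi0; rewrite -nullG; apply: pr_le.
  - exact: measurableI (mHs _ _).
  - exact: mH.
  by move=> t [_]; rewrite /H /= addr0 => h; exact: le_trans csnu.
set YS := Y @^-1` S L.+1.
have mYS : measurable YS by exact: mY.
have sub : E `&` H s L.+1 `<=` (E `&` H s L) `|`
    (((YS `&` H s L.+1) `\` (YS `&` H s L)) `|` [set t | M t <= nu]).
  move=> t [Et HL1]; have [HL|nHL] := leP (M t) (c (s + L%:Z)).
    by left.
  right; have [Mnu|nuM] := leP (M t) nu; first by right.
  left; split; first by split => //; exact: hS.
  by move=> [_]; rewrite /H /= leNgt nHL.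
have HLL : H s L `<=` H s L.+1.
  move=> t /= h; apply: le_trans h _; apply: c_mono.
  by rewrite lerD2l lez_nat.
have e := pr_le P (measurableI _ _ mE (mHs _ _)) (measurableU _ _ (measurableI _ _ mE (mHs _ _))
  (measurableU _ _ (measurableD (measurableI _ _ mYS (mHs _ _)) (measurableI _ _ mYS (mHs _ _))) (mH _))) sub.
apply: (le_trans e); apply: (le_trans (pr_U P _ _)).
- exact: measurableI (mHs _ _).
- apply: measurableU (mH _).
  exact: measurableD (measurableI _ _ mYS (mHs _ _)) (measurableI _ _ mYS (mHs _ _)).
apply: le_trans (lerD IH (pr_U P _ _)) _.
- exact: measurableD (measurableI _ _ mYS (mHs _ _)) (measurableI _ _ mYS (mHs _ _)).
- exact: mH.
rewrite nullG addr0 pr_D; last 3 first.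
- exact: measurableI (mHs _ _).
- exact: measurableI (mHs _ _).
- by move=> t [? ?]; split => //; exact: HLL.
rewrite /H /YS !(prod_rule (mS _) (ltW (c_gt0 _))).
rewrite -mulrBr mulrC -/(u s L.+1) -/(u s L).
by rewrite addrC -lerBrDr; exact: hPhi.
Qed.

Lemma final_bound s E (S : nat -> set R) (Phi : R -> R) :
  c s <= nu -> measurable E -> (forall j, measurable (S j)) ->
  (forall t j, nu < M t -> E t -> M t <= c (s + (j.+1)%:Z) ->
     c (s + j%:Z) < M t -> S j.+1 (Y t)) ->
  0 <= Phi (u s 0) ->
  (forall j, (u s j.+1 ^+ n - u s j ^+ n) * pr P (Y @^-1` S j.+1)
     <= Phi (u s j.+1) - Phi (u s j)) ->
  forall L, pr P E <= Phi (u s L) + (1 - u s L ^+ n).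
Proof.
move=> csnu mE mS hS Phi0 hPhi L.
have sub : E `<=` (E `&` H s L) `|` ~` H s L.
  by move=> t Et; have [h|h] := pselect (H s L t); [left|right].
have mEH := measurableI _ _ mE (mHs s L).
apply: le_trans (pr_le P mE (measurableU _ _ mEH (measurableC (mHs s L))) sub) _.
apply: le_trans (pr_U P mEH (measurableC (mHs s L))) _.
rewrite pr_C; last exact: mHs.
apply: lerD; first exact: step.
rewrite /H prH //; exact: ltW (c_gt0 _).
Qed.

Lemma kS s (j : nat) : s + (j.+1)%:Z - 1 = s + j%:Z.
Proof. by rewrite intS; ring. Qed.

Lemma u0 s : c s <= nu -> u s 0 = 0.
Proof. by move=> h; rewrite /u /F addr0 ltNge h. Qed.

Lemma u_ge0 s j : 0 <= u s j. Proof. exact: F_ge0. Qed.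
Lemma u_le1 s j : u s j <= 1. Proof. exact: F_le1. Qed.
Lemma u_mono s j : u s j <= u s j.+1.
Proof. by apply: F_mono; apply: c_mono; rewrite lerD2l lez_nat. Qed.
Lemma u_ratio s j : 1 - u s j <= rho `^ beta * (1 - u s j.+1).
Proof.
have := F_ratio (c_gt0 (s + (j.+1)%:Z)).
by rewrite -cB1 kS.
Qed.

Lemma mJ : measurable_fun setT (Jn rho Xs).
Proof.
exact: (measurable_realfun.measurable_funM (measurableT_comp (@measurable_realfun.measurable_ln R) mM)
  (measurable_cst (ln rho)^-1)).
Qed.

Lemma mK k : measurable [set t | cJ rho Xs t = k].
Proof.
have -> : [set t | cJ rho Xs t = k] =
  [set t | (k - 1)%:~R < Jn rho Xs t] `&` [set t | Jn rho Xs t <= k%:~R].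
  apply/seteqP; split => t /=.
    by move=> <-; have /andP[] := ceil_itv (Jn rho Xs t).
  by move=> [h1 h2]; apply: ceil_def; rewrite h1 h2.
apply: measurableI.
  exact: mlt (measurable_cst _) mJ.
exact: mle mJ (measurable_cst _).
Qed.

Lemma mYlt a : measurable [set t | a < Y t].
Proof. exact: mlt (measurable_cst _) (mX _). Qed.
Lemma mYle a : measurable [set t | Y t <= a].
Proof. exact: mle (mX _) (measurable_cst _). Qed.

Lemma mtail : measurable (tail_event rho Xs).
Proof.
have -> : tail_event rho Xs = [set t | exists k,
    ([set t | cJ rho Xs t = k] `&` [set t | c k < Y t]) t].
  apply/seteqP; split => t /=; first by move=> h; exists (cJ rho Xs t).
  by move=> [k [<-]].
by apply: m_int_union => k; apply: measurableI; [exact: mK|exact: mYlt].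
Qed.

Lemma mlast : measurable (last_event rho Xs).
Proof.
have -> : last_event rho Xs = [set t | exists k,
    ([set t | cJ rho Xs t = k] `&` ([set t | c (k - 1) < Y t] `&` [set t | Y t <= c k])) t].
  apply/seteqP; split => t /=.
    by move=> /andP[h1 h2]; exists (cJ rho Xs t); rewrite /c intrB.
  by move=> [k [<- [h1 h2]]]; apply/andP; split => //; move: h1; rewrite /c intrB.
apply: m_int_union => k; apply: measurableI; first exact: mK.
by apply: measurableI; [exact: mYlt|exact: mYle].
Qed.

Lemma mset_lt a : measurable [set x : R | a < x].
Proof.
rewrite (_ : [set x : R | a < x] = `]a, +oo[%classic); first exact: measurable_itv.
by apply/seteqP; split => x /=; rewrite in_itv /= andbT.
Qed.

Lemma mset_le a : measurable [set x : R | x <= a].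
Proof.
rewrite (_ : [set x : R | x <= a] = `]-oo, a]%classic); first exact: measurable_itv.
by apply/seteqP; split => x /=; rewrite in_itv /=.
Qed.

Lemma pr_gt a : pr P (Y @^-1` [set x | a < x]) = 1 - F a.
Proof.
rewrite (_ : Y @^-1` _ = ~` (Y @^-1` [set x | x <= a])); last first.
  by apply/seteqP; split => t /=; rewrite ltNge => /negP.
by rewrite pr_C ?prX //; exact: mY (mset_le _).
Qed.

Lemma pr_itv a b : a <= b -> pr P (Y @^-1` [set x | a < x <= b]) = F b - F a.
Proof.
move=> ab.
rewrite (_ : Y @^-1` _ = (Y @^-1` [set x | x <= b]) `\` (Y @^-1` [set x | x <= a])); last first.
  apply/seteqP; split => t /=.
    by move=> /andP[h1 h2]; split => //; rewrite leNgt h1.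
  by move=> [h1 /negP]; rewrite -ltNge => h2; rewrite h1 h2.
rewrite pr_D ?prX //; try exact: mY (mset_le _).
by move=> t /= h; exact: le_trans ab.
Qed.

Local Notation w := (rho `^ beta).

Lemma tail_up s L : c s <= nu ->
  pr P (tail_event rho Xs) <= G n (u s L) + (1 - u s L ^+ n).
Proof.
move=> csnu.
apply: (final_bound (S := fun j => [set x | c (s + j%:Z) < x])) => //.
- exact: mtail.
- by move=> j; exact: mset_lt.
- move=> t j nuM Et h1 h2 /=.
  have -> : s + (j.+1)%:Z = cJ rho Xs t.
    apply/esym/cJ_eq; first exact: lt_trans nuM.
    by rewrite kS h1 h2.
  exact: Et.
- by rewrite u0 // G0.
move=> j; rewrite pr_gt -/(u s j.+1).
exact: I1 (u_ge0 _ _) (u_ge0 _ _).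
Qed.

Lemma tail_low s L : c s <= nu ->
  w^-1 * G n (u s L) <= pr P (tail_event rho Xs).
Proof.
move=> csnu.
have w0 : 0 < w by exact: lt_le_trans w_ge1.
have h := @final_bound s (~` tail_event rho Xs) (fun j => [set x | x <= c (s + j%:Z)])
  (fun v => v ^+ n - w^-1 * G n v) csnu (measurableC mtail) (fun j => mset_le _).
suff : 1 - pr P (tail_event rho Xs) <= 1 - w^-1 * G n (u s L).
  by rewrite lerD2l lerN2.
rewrite -pr_C; last exact: mtail.
apply: le_trans (h _ _ _ L) _.
- move=> t j nuM Et h1 h2 /=.
  have e : s + (j.+1)%:Z = cJ rho Xs t.
    apply/esym/cJ_eq; first exact: lt_trans nuM.
    by rewrite kS h1 h2.
  by rewrite leNgt e; apply/negP.
- by rewrite u0 // G0 // expr0n eqn0Ngt n_ge1 /= mulr0 subr0.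
- move=> j; rewrite prX.
  exact: step_low (u_ge0 _ _) (u_ge0 _ _) (u_mono _ _) w0 (u_ratio _ _).
by rewrite alg2.
Qed.

Lemma mset_itv a b : measurable [set x : R | a < x <= b].
Proof.
rewrite (_ : [set x : R | a < x <= b] = `]a, b]%classic); first exact: measurable_itv.
by apply/seteqP; split => x /=; rewrite in_itv /=.
Qed.

Lemma last_up s L : c s <= nu ->
  pr P (last_event rho Xs) <= (w - 1) * G n (u s L) + (1 - u s L ^+ n).
Proof.
move=> csnu.
apply: (final_bound (S := fun j => [set x | c (s + j%:Z - 1) < x <= c (s + j%:Z)])
  (Phi := fun v => (w - 1) * G n v)) => //.
- exact: mlast.
- by move=> j; exact: mset_itv.
- move=> t j nuM Et h1 h2 /=.
  have -> : s + (j.+1)%:Z = cJ rho Xs t.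
    apply/esym/cJ_eq; first exact: lt_trans nuM.
    by rewrite kS h1 h2.
  by move: Et; rewrite /last_event /c /= intrB.
- by rewrite u0 // G0 // mulr0.
move=> j; rewrite kS pr_itv; last by apply: c_mono; rewrite lerD2l lez_nat.
exact: step_last (u_ge0 _ _) (u_ge0 _ _) (u_mono _ _) w_ge1 (u_ratio _ _).
Qed.

Lemma exists_s : exists s, c s <= nu.
Proof.
exists (Num.floor (ln nu / ln rho)); rewrite c_le //.
by rewrite -ler_pdivlMr ?lnrho_gt0 // floor_le.
Qed.

Lemma exists_L s e : 0 < e -> exists L, 1 - u s L <= e.
Proof.
move=> e0.
pose th := e `^ beta^-1.
have th0 : 0 < th by exact: powR_gt0.
pose y := nu / th + nu.
have y0 : nu < y by rewrite /y ltrDr divr_gt0.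
have y0' : 0 < y by exact: lt_trans y0.
pose k0 := Num.ceil (ln y / ln rho).
exists `|k0 - s|%N.
have hk : k0 <= s + `|k0 - s|%N%:Z.
  by rewrite abszE -lerBlDl ler_norm.
have yc : y <= c (s + `|k0 - s|%N%:Z).
  apply: le_trans (c_mono hk); rewrite ge_c // -ler_pdivrMr ?lnrho_gt0 //.
  exact: ceil_ge.
set C := c _ in yc *.
have C0 : 0 < C by exact: lt_le_trans yc.
rewrite /u -/C /F (lt_le_trans y0 yc) opprB addrC subrK.
have h1 : nu / C <= th.
  rewrite ler_pdivrMr // (le_trans _ (ler_wpM2l (ltW th0) yc)) //.
  by rewrite /y mulrDr mulrCA mulfV ?gt_eqF // mulr1 lerDl mulr_ge0 ?ltW.
have h2 : (nu / C) `^ beta <= th `^ beta.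
  apply: ge0_ler_powR h1; first exact: ltW.
  - by rewrite nnegrE divr_ge0 ?ltW.
  - by rewrite nnegrE ltW.
apply: (le_trans h2); rewrite /th -powRrM mulVf ?gt_eqF // powRr1 //.
exact: ltW.
Qed.

Lemma main_res :
  (P (last_event rho Xs)
     <= ((rho `^ beta - rho `^ (- beta)) / (n%:R + 1))%:E)%E
  /\ (((rho `^ (- beta)) / (n%:R + 1))%:E <= P (tail_event rho Xs))%E
  /\ (P (tail_event rho Xs) <= (1 / (n%:R + 1))%:E)%E.
Proof.
have [s csnu] := exists_s.
have w1 := w_ge1.
have w0 : 0 < w by exact: lt_le_trans w1.
have eN : n%:R + 1 = (n.+1)%:R :> R by rewrite mulrSr.
have n0 : 0 < n%:R :> R by rewrite ltr0n.
have nb : forall L e, 1 - u s L <= e / n%:R -> n%:R * (1 - u s L) <= e.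
  move=> L e hL; have := ler_wpM2l (ltW n0) hL.
  by rewrite mulrCA mulfV ?gt_eqF // mulr1.
rewrite (prE P mlast) (prE P mtail) !lee_fin powRN eN.
split; [|split].
- apply/ler_addgt0Pr => e e0.
  have [L hL] := exists_L s (divr_gt0 e0 n0).
  have v01 : 0 <= u s L <= 1 by rewrite u_ge0 u_le1.
  apply: (le_trans (fin_last v01 w1 (last_up L csnu))); apply: lerD; last exact: nb.
  apply: ler_wpM2r; first by rewrite invr_ge0 ler0n.
  by rewrite lerD2l lerN2 invr_le1 // unitfE gt_eqF.
- apply/ler_addgt0Pr => e e0.
  have [L hL] := exists_L s e0.
  have v01 : 0 <= u s L <= 1 by rewrite u_ge0 u_le1.
  have h := fin_tail_low v01 w1 (tail_low L csnu).
  rewrite -lerBlDr; exact: le_trans (lerB (lexx _) hL) h.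
- apply/ler_addgt0Pr => e e0.
  have [L hL] := exists_L s (divr_gt0 e0 n0).
  have v01 : 0 <= u s L <= 1 by rewrite u_ge0 u_le1.
  apply: (le_trans (fin_tail_up v01 (tail_up L csnu))); apply: lerD => //.
  exact: nb.
Qed.

End M.

Theorem theorem5 (R : realType) (d : measure_display) (T : measurableType d)
  (P : probability T R) (n : nat) (nu beta rho : R)
  (Xs : 'I_n.+1 -> T -> R) :
  0 < nu -> 0 < beta -> 1 < rho -> (1 <= n)%N ->
  mutually_independent P Xs ->
  (forall i, is_pareto P nu beta (Xs i)) ->
  (P (last_event rho Xs)
     <= ((rho `^ beta - rho `^ (- beta)) / (n%:R + 1))%:E)%E
  /\ (((rho `^ (- beta)) / (n%:R + 1))%:E <= P (tail_event rho Xs))%E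
  /\ (P (tail_event rho Xs) <= (1 / (n%:R + 1))%:E)%E.
Proof.
move=> h1 h2 h3 h4 h5 h6.
exact: (@main_res R d T P n nu beta rho Xs h1 h2 h3 h4 h5 h6).
Qed.
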